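(* Let $d\ge 1$, let $\Lambda$ be a $(d-2)$-dimensional simplicial complex with vertex set $[n]$, and let $\Gamma=0*\Lambda$ be the cone over $\Lambda$ with a new apex vertex $0$. Let $p':[n]\to\mathbb{R}^{d-1}$ be such that the coordinates $\{p'(s)_t:s\in[n],t\in[d-1]\}$ are algebraically independent over $\mathbb{Q}$, and set $\mathbb{F}'=\mathbb{Q}(p'(s)_t:s\in[n],t\in[d-1])$. Let $a_1,\dots,a_n\in\mathbb{R}$ be algebraically independent over $\mathbb{F}'$, and let $\mathbb{F}\subseteq\mathbb{R}$ be any field containing $\mathbb{F}'(a_1,\dots,a_n)$. Define $p:\{0,1,\dots,n\}\to\mathbb{F}^d$ by $p(0)=(0,\dots,0,-1)$ and $p(s)=((1+a_s)p'(s),a_s)$ for $s\in[n]$. Then for all $0\le i\le d-1$ there exists an $\mathbb{F}'$-linear map $\psi_i:\mathcal{S}^\ell_i(\Lambda,p';\mathbb{F}')\to\mathcal{S}^\ell_i(\Gamma,p;\mathbb{F})$ such that: (1) for every $\omega'\in\mathcal{S}^\ell_i(\Lambda,p';\mathbb{F}')$, $\mathrm{supp}(\psi_i(\omega'))=\mathrm{skel}_{i-1}(0*\mathrm{supp}(\omega'))$; and (2) with $c'=\sum_{j=1}^n x_j$ and $c=\sum_{j=0}^n x_j$, $\psi_{i-1}(\partial_{c'}\omega')=\partial_c(\psi_i(\omega'))$ for all $\omega'\in\mathcal{S}^\ell_i(\Lambda,p';\mathbb{F}')$ (for $1\le i\le d-1$).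
   Context: Simplicial complexes are nonempty families of subsets of a finite vertex set closed under subsets and containing all singletons; an $i$-face has $i+1$ elements. The cone $0*\Lambda=\{\sigma,\sigma\cup\{0\}:\sigma\in\Lambda\}$. $\mathrm{skel}_m(K)$ is the subcomplex of faces of dimension $\le m$. For a complex $K$ with vertex set $W$, a field $\mathbb{K}\subseteq\mathbb{R}$ and a map $r:W\to\mathbb{K}^e$ where $e-1=\dim K$, set $\theta_t=\sum_{v\in W}r(v)_tx_v\in\mathbb{K}[x_v:v\in W]$ for $t\in[e]$, and for a linear form $\ell=\sum_v\ell_vx_v$ let $\partial_\ell=\sum_v\ell_v\,\partial/\partial x_v$. A linear $i$-stress on $(K,r;\mathbb{K})$ is a homogeneous degree-$i$ polynomial $\lambda\in\mathbb{K}[x_v]$ such that every monomial with nonzero coefficient has support (set of variables dividing it) a face of $K$, and $\partial_{\theta_t}\lambda=0$ for all $t\in[e]$; these form the $\mathbb{K}$-vector space $\mathcal{S}^\ell_i(K,r;\mathbb{K})$. For a stress $\lambda$ of degree $i$ and an $(i-1)$-face $\sigma$, $\lambda_\sigma$ is the coefficient of $\prod_{v\in\sigma}x_v$, and $\mathrm{supp}(\lambda)$ is the subcomplex generated by all $(i-1)$-faces $\sigma$ with $\lambda_\sigma\neq0$. *)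

(* Defs.v *)
From HB Require Import structures.
From mathcomp Require Import all_boot all_order all_algebra.
From mathcomp Require Import reals.
From mathcomp Require Import mpoly.
Set Implicit Arguments. Unset Strict Implicit. Unset Printing Implicit Defensive.
Import Order.TTheory GRing.Theory Num.Theory.
Local Open Scope ring_scope.

Definition subfield (R : fieldType) (K : R -> Prop) : Prop :=
  [/\ K 0, K 1,
      (forall x y, K x -> K y -> K (x - y)),
      (forall x y, K x -> K y -> K (x * y)) &
      (forall x, K x -> x != 0 -> K x^-1)].

Definition gen_field (R : fieldType) (S : R -> Prop) : R -> Prop :=
  fun x => forall K : R -> Prop, subfield K -> (forall y, S y -> K y) -> K x.

Definition rat_field (R : fieldType) : R -> Prop := fun x => exists q : rat, x = ratr q.

Definition alg_indep (R : fieldType) (K : R -> Prop) (I : finType) (x : I -> R) : Prop :=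
  forall P : {mpoly R[#|I|]}, (forall m, K P@_m) ->
    meval (fun j => x (enum_val j)) P = 0 -> P = 0.

Definition is_complex (V : finType) (W : {set V}) (K : {set {set V}}) : Prop :=
  [/\ K != set0,
      (forall s t : {set V}, s \in K -> t \subset s -> t \in K),
      (forall v, v \in W -> [set v] \in K) &
      (forall s : {set V}, s \in K -> s \subset W)].

(** [K] has dimension [c - 1]: the maximal cardinality of a face is [c]. *)
Definition card_dim (V : finType) (K : {set {set V}}) (c : nat) : Prop :=
  (forall s : {set V}, s \in K -> #|s| <= c)%N /\ exists2 s : {set V}, s \in K & #|s| = c.

Definition cone (V : finType) (v : V) (K : {set {set V}}) : {set {set V}} :=
  [set t : {set V} | [exists s in K, (t == s) || (t == v |: s)]].

(** [skel_card k K] = faces of [K] with at most [k] elements,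
    i.e. skel_{k-1}(K) (faces of dimension <= k-1). *)
Definition skel_card (V : finType) (k : nat) (K : {set {set V}}) : {set {set V}} :=
  [set t in K | #|t| <= k]%N.

Definition sqmon (n : nat) (s : {set 'I_n}) : 'X_{1..n} :=
  [multinom (i \in s : nat) | i < n].

Definition mono_supp (n : nat) (m : 'X_{1..n}) : {set 'I_n} := [set i | m i != 0%N].

Definition dlin (R : nzRingType) (n : nat) (l : 'I_n -> R) (p : {mpoly R[n]}) : {mpoly R[n]} :=
  \sum_(i < n) l i *: p^`M(i).

(** [lam] is a linear [i]-stress on (K, r; Kf), where K has vertex set [W]
    and r : W -> R^k (values of r outside W are ignored);
    theta_t = sum_{v in W} r(v)_t x_v. *)
Definition is_stress (R : nzRingType) (n : nat) (Kf : R -> Prop) (W : {set 'I_n})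
    (K : {set {set 'I_n}}) (k : nat) (r : 'I_n -> 'I_k -> R) (i : nat)
    (lam : {mpoly R[n]}) : Prop :=
  [/\ (forall m, Kf lam@_m),
      (forall m, lam@_m != 0 -> mdeg m = i),
      (forall m, lam@_m != 0 -> mono_supp m \in K) &
      (forall t : 'I_k, dlin (fun v => if v \in W then r v t else 0) lam = 0)].

Definition supp (R : nzRingType) (n : nat) (i : nat) (lam : {mpoly R[n]}) : {set {set 'I_n}} :=
  [set t : {set 'I_n} | [exists s : {set 'I_n}, [&& #|s| == i, lam@_(sqmon s) != 0 & t \subset s]]].

(* Main.v *)
Require Import Defs.
From HB Require Import structures.
From mathcomp Require Import all_boot all_order all_algebra.
From mathcomp Require Import reals.
From mathcomp Require Import mpoly.
From mathcomp Require Import ring.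
Import Order.TTheory GRing.Theory Num.Theory.
Set Implicit Arguments. Unset Strict Implicit. Unset Printing Implicit Defensive.
Local Open Scope ring_scope.

Section PF.
Variables (R : fieldType) (K : R -> Prop) (HK : subfield K).

Lemma sK0 : K 0. Proof. by case: HK. Qed.
Lemma sK1 : K 1. Proof. by case: HK. Qed.
Lemma sKB x y : K x -> K y -> K (x - y). Proof. by case: HK => _ _ h _ _; apply: h. Qed.
Lemma sKM x y : K x -> K y -> K (x * y). Proof. by case: HK => _ _ _ h _; apply: h. Qed.
Lemma sKN x : K x -> K (- x). Proof. by move=> kx; rewrite -sub0r; apply: sKB sK0 kx. Qed.
Lemma sKD x y : K x -> K y -> K (x + y).
Proof. by move=> kx ky; rewrite -[y]opprK; apply: sKB => //; apply: sKN. Qed.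
Lemma sKV x : K x -> K x^-1.
Proof.
case: (eqVneq x 0) => [->|nz]; first by rewrite invr0.
by case: HK => _ _ _ _ h kx; apply: h.
Qed.
Lemma sKn k : K k%:R.
Proof. elim: k => [|k IH]; first exact: sK0. by rewrite -addn1 natrD; apply: sKD IH sK1. Qed.
Lemma sKMn x k : K x -> K (x *+ k).
Proof. by move=> kx; rewrite -mulr_natr; apply: sKM kx (sKn k). Qed.

Variable N : nat.
Definition PF (q : {mpoly R[N]}) := forall m, K q@_m.
Lemma PF0 : PF 0. Proof. by move=> m; rewrite mcoeff0; exact: sK0. Qed.
Lemma PFC c : K c -> PF c%:MP.
Proof. by move=> kc m; rewrite mcoeffC; apply: sKM kc (sKn _). Qed.
Lemma PF1 : PF 1. Proof. by move=> m; rewrite mcoeff1; exact: sKn. Qed.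
Lemma PFX m : PF 'X_[m]. Proof. by move=> k; rewrite mcoeffX; exact: sKn. Qed.
Lemma PFD p q : PF p -> PF q -> PF (p + q).
Proof. by move=> hp hq m; rewrite mcoeffD; apply: sKD. Qed.
Lemma PFN p : PF p -> PF (- p).
Proof. by move=> hp m; rewrite mcoeffN; apply: sKN. Qed.
Lemma PFZ c p : K c -> PF p -> PF (c *: p).
Proof. by move=> kc hp m; rewrite mcoeffZ; apply: sKM. Qed.
Lemma PFM p q : PF p -> PF q -> PF (p * q).
Proof.
move=> hp hq m; rewrite mcoeffM; apply: (big_ind K) => //.
- exact: sK0.
- exact: sKD.
- by move=> i _; apply: sKM.
Qed.
Lemma PF_sum (I : Type) (r : seq I) (P : pred I) F :
  (forall i, P i -> PF (F i)) -> PF (\sum_(i <- r | P i) F i).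
Proof. by move=> h; apply: (big_ind PF) => //; [exact: PF0 | exact: PFD]. Qed.
Lemma PF_prod (I : Type) (r : seq I) (P : pred I) F :
  (forall i, P i -> PF (F i)) -> PF (\prod_(i <- r | P i) F i).
Proof. by move=> h; apply: (big_ind PF) => //; [exact: PF1 | exact: PFM]. Qed.
Lemma PFXn p k : PF p -> PF (p ^+ k).
Proof. by move=> hp; elim: k => [|k IH]; [rewrite expr0; exact: PF1 | rewrite exprS; apply: PFM]. Qed.
End PF.

Lemma PF_comp (R : fieldType) (K : R -> Prop) (HK : subfield K) (N M : nat)
  (p : {mpoly R[M]}) (lq : M.-tuple {mpoly R[N]}) :
  PF K p -> (forall i, PF K (tnth lq i)) -> PF K (p \mPo lq).
Proof.
move=> hp hl; rewrite comp_mpolyE; apply: PF_sum => // m _.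
apply: PFZ => //; apply: PF_prod => // i _; exact: PFXn.
Qed.

Section Chain.
Variables (R : comRingType) (N M : nat) (z : N.-tuple {mpoly R[M]}).
Definition CR (p : {mpoly R[N]}) := forall k,
  (p \mPo z)^`M(k) = \sum_(j < N) (p^`M(j) \mPo z) * (tnth z j)^`M(k).

Lemma CR0 : CR 0.
Proof. by move=> k; rewrite comp_mpoly0 mderiv0 big1 // => j _; rewrite mderiv0 comp_mpoly0 mul0r. Qed.
Lemma CRD p q : CR p -> CR q -> CR (p + q).
Proof.
move=> hp hq k; rewrite comp_mpolyD mderivD hp hq -big_split /=.
by apply: eq_bigr => j _; rewrite mderivD comp_mpolyD mulrDl.
Qed.
Lemma CRZ c p : CR p -> CR (c *: p).
Proof.
move=> hp k; rewrite comp_mpolyZ mderivZ hp scaler_sumr; apply: eq_bigr => j _.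
by rewrite mderivZ comp_mpolyZ scalerAl.
Qed.
Lemma CR1 : CR 1.
Proof.
move=> k; rewrite comp_mpoly1 -mpolyC1 mderivC big1 // => j _.
by rewrite mderivC comp_mpoly0 mul0r.
Qed.
Lemma CRM p q : CR p -> CR q -> CR (p * q).
Proof.
move=> hp hq k; rewrite rmorphM /= mderivM hp hq mulr_suml mulr_sumr -big_split.
apply: eq_bigr => j _ /=; rewrite mderivM comp_mpolyD !rmorphM /=.
ring.
Qed.
Lemma mderivXU (i k : 'I_N) : ('X_i : {mpoly R[N]})^`M(k) = (i == k)%:R.
Proof.
rewrite mderivX mnm1E; case: (eqVneq i k) => [->|ne]; last by rewrite scale0r.
have -> : (U_(k) - U_(k))%MM = 0%MM by apply/mnmP => j; rewrite mnmBE mnm0E subnn.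
by rewrite mpolyX0 scale1r.
Qed.
Lemma CRX i : CR 'X_i.
Proof.
move=> k; rewrite comp_mpolyXU -tnth_nth (bigD1 i) //= mderivXU eqxx.
rewrite rmorph1 mul1r big1 ?addr0 // => j ne.
by rewrite mderivXU eq_sym (negbTE ne) rmorph0 mul0r.
Qed.
Lemma CRXn p k : CR p -> CR (p ^+ k).
Proof. by move=> hp; elim: k => [|k IH]; [rewrite expr0; exact: CR1 | rewrite exprS; apply: CRM]. Qed.

Lemma chain p : CR p.
Proof.
rewrite [p]mpolyE; apply: (big_ind CR); [exact: CR0 | exact: CRD |] => m _.
apply: CRZ; rewrite mpolyXE_id; apply: (big_ind CR); [exact: CR1 | exact: CRM |].
by move=> i _; apply: CRXn; apply: CRX.
Qed.

Lemma dlin_comp (l : 'I_M -> R) p :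
  dlin l (p \mPo z) = \sum_(j < N) (p^`M(j) \mPo z) * dlin l (tnth z j).
Proof.
rewrite /dlin; under eq_bigr => k _ do rewrite chain scaler_sumr.
rewrite exchange_big /=; apply: eq_bigr => j _; rewrite mulr_sumr.
by apply: eq_bigr => k _; rewrite scalerAr.
Qed.
End Chain.

Section Dlin.
Variables (R : comRingType) (N : nat).
Implicit Types (p q : {mpoly R[N]}) (l : 'I_N -> R).
Lemma dlinD l p q : dlin l (p + q) = dlin l p + dlin l q.
Proof. by rewrite /dlin -big_split; apply: eq_bigr => k _; rewrite mderivD scalerDr. Qed.
Lemma dlinZ l c p : dlin l (c *: p) = c *: dlin l p.
Proof. by rewrite /dlin scaler_sumr; apply: eq_bigr => k _; rewrite mderivZ !scalerA mulrC. Qed.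
Lemma dlin_ext l1 l2 p : l1 =1 l2 -> dlin l1 p = dlin l2 p.
Proof. by move=> h; apply: eq_bigr => k _; rewrite h. Qed.
Lemma dlinXU l i : dlin l ('X_i : {mpoly R[N]}) = (l i)%:MP.
Proof.
rewrite /dlin (bigD1 i) //= mderivXU eqxx big1 ?addr0; first by rewrite alg_mpolyC.
by move=> k ne; rewrite mderivXU eq_sym (negbTE ne) scaler0.
Qed.
Lemma dlin0 p : dlin (fun _ => 0) p = 0.
Proof. by rewrite /dlin big1 // => k _; rewrite scale0r. Qed.
Lemma dlin_delta i p : dlin (fun k => (k == i)%:R) p = p^`M(i).
Proof.
rewrite /dlin (bigD1 i) //= eqxx scale1r big1 ?addr0 //.
by move=> k ne; rewrite (negbTE ne) scale0r.
Qed.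
Lemma mcoeff_dlin l p m : (dlin l p)@_m = \sum_k l k * (p@_(m + U_(k)) *+ (m k).+1).
Proof. rewrite /dlin raddf_sum; by apply: eq_bigr => k _ /=; rewrite -mul_mpolyC mcoeffCM mcoeff_deriv. Qed.
End Dlin.

Lemma coef_comp_diag (R : comRingType) (N : nat) (p : {mpoly R[N]})
  (lq : N.-tuple {mpoly R[N]}) (f : 'X_{1..N} -> R) :
  (forall m, 'X_[m] \mPo lq = f m *: 'X_[m]) ->
  forall M, (p \mPo lq)@_M = p@_M * f M.
Proof.
move=> hf M; rewrite comp_mpolyEX.
have -> : p@_M = (\sum_(m <- msupp p) p@_m *: 'X_[m])@_M by rewrite -mpolyE.
rewrite !raddf_sum /= mulr_suml; apply: eq_bigr => m _.
rewrite hf scalerA -!mul_mpolyC !mcoeffCM !mcoeffX.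
by case: eqP => [->|_]; rewrite ?mulr1 ?mulr0 ?mul0r.
Qed.

Section Zsec.
Variables (R : comRingType) (n : nat) (al be : 'I_n.+1 -> R).
Hypothesis al0 : al ord0 = 0.
Hypothesis be0 : be ord0 = 0.
Definition zt : n.+1.-tuple {mpoly R[n.+1]} :=
  [tuple al i *: 'X_i + be i *: 'X_(ord0) | i < n.+1].
Definition et : n.+1.-tuple {mpoly R[n.+1]} :=
  [tuple (if i == ord0 then 0 else 'X_i) | i < n.+1].
Definition yt : n.+1.-tuple {mpoly R[n.+1]} :=
  [tuple al i *: 'X_i | i < n.+1].

Lemma dlin_zt l j : dlin l (tnth zt j) = (l j * al j + l ord0 * be j)%:MP.
Proof. by rewrite tnth_mktuple dlinD !dlinZ !dlinXU -!mul_mpolyC -!mpolyCM -rmorphD /= !(mulrC (l _)). Qed.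

Lemma dlin_z l (p : {mpoly R[n.+1]}) : dlin l (p \mPo zt) =
  (dlin (fun j => l j * al j + l ord0 * be j) p) \mPo zt.
Proof.
rewrite dlin_comp; under eq_bigr do rewrite dlin_zt.
rewrite /dlin raddf_sum; apply: eq_bigr => j _.
by rewrite /= comp_mpolyZ mulrC mul_mpolyC.
Qed.

Lemma compX_et (m : 'X_{1..n.+1}) : 'X_[m] \mPo et = (m ord0 == 0%N)%:R *: 'X_[m].
Proof.
rewrite comp_mpolyX; case: (eqVneq (m ord0) 0%N) => h0.
  rewrite scale1r mpolyXE_id; apply: eq_bigr => i _; rewrite tnth_mktuple.
  by case: (eqVneq i ord0) => [->|//]; rewrite h0 !expr0.
rewrite scale0r (bigD1 ord0) //= tnth_mktuple eqxx expr0n (negbTE h0) mul0r.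
by [].
Qed.

Lemma E1coef (q : {mpoly R[n.+1]}) (M : 'X_{1..n.+1}) : M ord0 = 0%N -> (q \mPo et)@_M = q@_M.
Proof. by move=> h; rewrite (coef_comp_diag _ compX_et) h eqxx mulr1. Qed.

Lemma compX_yt (m : 'X_{1..n.+1}) : 'X_[m] \mPo yt = (\prod_i al i ^+ m i) *: 'X_[m].
Proof.
rewrite comp_mpolyX mpolyXE_id -scaler_prod; apply: eq_bigr => i _.
by rewrite tnth_mktuple exprZn.
Qed.

Lemma compA_et (p : {mpoly R[n.+1]}) : (p \mPo zt) \mPo et = p \mPo [tuple tnth zt i \mPo et | i < n.+1].
Proof.
rewrite [p \mPo zt]comp_mpolyEX [RHS]comp_mpolyEX raddf_sum; apply: eq_bigr => m _ /=.
rewrite comp_mpolyZ !comp_mpolyX rmorph_prod; congr (_ *: _); apply: eq_bigr => i _.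
by rewrite rmorphXn tnth_mktuple.
Qed.

Lemma zt_et i : tnth zt i \mPo et = al i *: 'X_i.
Proof.
rewrite tnth_mktuple comp_mpolyD !comp_mpolyZ !comp_mpolyXU -!tnth_nth !tnth_mktuple eqxx.
rewrite scaler0 addr0; case: (eqVneq i ord0) => [->|//].
by rewrite al0 !scale0r.
Qed.

Lemma C1 (p : {mpoly R[n.+1]}) (M : 'X_{1..n.+1}) : M ord0 = 0%N -> (p \mPo zt)@_M = p@_M * \prod_i al i ^+ M i.
Proof.
move=> h; rewrite -(E1coef _ h) compA_et.
have -> : [tuple tnth zt i \mPo et | i < n.+1] = yt.
  by apply: eq_from_tnth => i; rewrite [in LHS]tnth_mktuple zt_et /yt tnth_mktuple.
exact: (coef_comp_diag _ compX_yt).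
Qed.

Lemma C2 (p : {mpoly R[n.+1]}) (M : 'X_{1..n.+1}) : M ord0 = 0%N -> (p \mPo zt)@_(M + U_(ord0)) =
  (\sum_j be j * (p@_(M + U_(j)) *+ (M j).+1)) * \prod_i al i ^+ M i.
Proof.
move=> h.
have <- : ((p \mPo zt)^`M(ord0))@_M = (p \mPo zt)@_(M + U_(ord0)).
  by rewrite mcoeff_deriv h.
rewrite -dlin_delta dlin_z C1 // mcoeff_dlin; congr (_ * _).
apply: eq_bigr => j _; congr (_ * _).
case: (eqVneq j ord0) => [->|ne]; first by rewrite al0 be0 eqxx !mulr0 add0r.
by rewrite eqxx mul0r add0r mul1r.
Qed.
End Zsec.

Lemma gen_field_sub (R : fieldType) (S : R -> Prop) : subfield (gen_field S).
Proof.
split.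
- by move=> K hK _; case: hK.
- by move=> K hK _; case: hK.
- by move=> x y hx hy K hK hS; case: (hK) => _ _ h _ _; apply: h; [apply: hx | apply: hy].
- by move=> x y hx hy K hK hS; case: (hK) => _ _ _ h _; apply: h; [apply: hx | apply: hy].
- by move=> x hx nz K hK hS; case: (hK) => _ _ _ _ h; apply: h (hx K hK hS) nz.
Qed.

Lemma gen_field_in (R : fieldType) (S : R -> Prop) x : S x -> gen_field S x.
Proof. by move=> h K _ hS; apply: hS. Qed.

Lemma rat_field_sub (R : numFieldType) : subfield (@rat_field R).
Proof.
split.
- by exists 0; rewrite rmorph0.
- by exists 1; rewrite rmorph1.
- by move=> x y [q ->] [r ->]; exists (q - r); rewrite rmorphB.
- by move=> x y [q ->] [r ->]; exists (q * r); rewrite rmorphM.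
- by move=> x [q ->] nz; exists q^-1; rewrite fmorphV.
Qed.

Section AI.
Variables (R : fieldType) (K : R -> Prop) (HK : subfield K) (I : finType) (x : I -> R).
Hypothesis hx : alg_indep K x.
Definition Xv (i : I) : {mpoly R[#|I|]} := 'X_(enum_rank i).
Definition xv := fun j : 'I_#|I| => x (enum_val j).
Lemma meval_Xv v i : (Xv i).@[v] = v (enum_rank i).
Proof. by rewrite /Xv mevalXU. Qed.
Lemma meval_Xv_x i : (Xv i).@[xv] = x i.
Proof. by rewrite meval_Xv /xv enum_rankK. Qed.

Lemma AI_nz (P : {mpoly R[#|I|]}) (v : 'I_#|I| -> R) :
  PF K P -> P.@[v] != 0 -> P.@[xv] != 0.
Proof.
move=> hP hv; apply/negP => /eqP h; have E := hx hP h.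
by move: hv; rewrite E meval0 eqxx.
Qed.

Lemma AI_one i : 1 + x i != 0.
Proof.
have PFP : PF K (1 + Xv i) by apply: PFD => //; [exact: PF1 | exact: PFX].
have hv : (1 + Xv i).@[fun _ => 0] != 0 by rewrite mevalD meval1 meval_Xv addr0 oner_neq0.
by have := AI_nz PFP hv; rewrite mevalD meval1 meval_Xv_x.
Qed.

Lemma AI_lin (c : I -> R) : (forall i, K (c i)) -> (exists i, c i != 0) ->
  \sum_i c i * (x i / (1 + x i)) != 0.
Proof.
move=> hc [i0 hi0].
pose P := \sum_i c i *: (Xv i * \prod_(u | u != i) (1 + Xv u)).
have PFP : PF K P.
  apply: PF_sum => // i _; apply: PFZ => //; apply: PFM => //; first exact: PFX.
  by apply: PF_prod => // u _; apply: PFD => //; [exact: PF1 | exact: PFX].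
have hv : P.@[fun j => (j == enum_rank i0)%:R] != 0.
  rewrite /P raddf_sum (bigD1 i0) //= [X in _ + X]big1.
    rewrite addr0 mevalZ mevalM meval_Xv eqxx mul1r rmorph_prod /= big1 ?mulr1 //.
    move=> u hu; rewrite mevalD meval1 meval_Xv.
    by rewrite (inj_eq enum_rank_inj) (negbTE hu) addr0.
  move=> i hi; rewrite mevalZ mevalM meval_Xv.
  by rewrite (inj_eq enum_rank_inj) (negbTE hi) mul0r mulr0.
have := AI_nz PFP hv; apply: contra => /eqP hs.
have -> : P.@[xv] = (\sum_i c i * (x i / (1 + x i))) * \prod_u (1 + x u).
  rewrite /P raddf_sum mulr_suml; apply: eq_bigr => i _ /=.
  rewrite mevalZ mevalM meval_Xv_x rmorph_prod /=.
  under eq_bigr do rewrite mevalD meval1 meval_Xv_x.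
  rewrite [in RHS](bigD1 i) //=.
  have h1 := AI_one i.
  by field.
by rewrite hs mul0r.
Qed.
End AI.

Lemma AI_mat (R : fieldType) (K : R -> Prop) (HK : subfield K) (n e : nat)
  (y : 'I_n * 'I_e -> R) (hy : alg_indep K y) (T : {set 'I_n}) (c : 'I_n -> R) :
  (#|T| <= e)%N -> (forall s, s \notin T -> c s = 0) ->
  (forall t, \sum_s c s * y (s, t) = 0) -> forall s, c s = 0.
Proof.
move=> hk hT hsum.
pose A : 'M[R]_#|T| := \matrix_(r, t) y (enum_val r, widen_ord hk t).
pose v : 'rV[R]_#|T| := \row_r c (enum_val r).
have vA : v *m A = 0.
  apply/rowP => t; rewrite !mxE; rewrite -[RHS](hsum (widen_ord hk t)).
  under eq_bigr do rewrite !mxE.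
  rewrite [RHS](bigID (mem T)) /= [X in _ = _ + X]big1 ?addr0; last first.
    by move=> s hs; rewrite hT ?mul0r.
  by rewrite [RHS]big_enum_val.
case: (eqVneq v 0) => [v0|vnz].
  move=> s; case: (boolP (s \in T)) => [sT|/hT//].
  have := congr1 (fun w : 'rV_ _ => w 0 (enum_rank_in sT s)) v0.
  by rewrite !mxE enum_rankK_in.
have dA : \det A = 0 by apply/eqP/det0P; exists v.
exfalso.
pose Mx : 'M[{mpoly R[#|{: 'I_n * 'I_e}|]}]_#|T| :=
  \matrix_(r, t) Xv R (enum_val r, widen_ord hk t).
pose D := \det Mx.
have PFD : PF K D.
  rewrite /D /determinant; apply: PF_sum => // s _; apply: PFM => //.
    by apply: PFXn => //; apply: PFN => //; exact: PF1.
  by apply: PF_prod => // i _; rewrite mxE; exact: PFX.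
pose v0 := fun j : 'I_#|{: 'I_n * 'I_e}| =>
  ([exists r : 'I_#|T|, enum_val j == (enum_val r, widen_ord hk r)])%:R : R.
have hv : D.@[v0] != 0.
  have -> : D.@[v0] = \det (map_mx (meval v0) Mx) by rewrite det_map_mx.
  have -> : map_mx (meval v0) Mx = 1%:M.
    apply/matrixP => r t; rewrite !mxE meval_Xv /v0 enum_rankK.
    suff -> : [exists r0, (enum_val r, widen_ord hk t) == (enum_val r0, widen_ord hk r0)]
      = (r == t) by [].
    apply/existsP/eqP => [[r' /eqP [h1 h2]]|->]; last by exists t.
    by move/val_inj: h2 => ->; apply: enum_val_inj.
  by rewrite det1 oner_neq0.
have := AI_nz hy PFD hv.
have -> : D.@[xv y] = \det (map_mx (meval (xv y)) Mx) by rewrite det_map_mx.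
have -> : map_mx (meval (xv y)) Mx = A.
  by apply/matrixP => r t; rewrite !mxE meval_Xv_x.
by rewrite dA eqxx.
Qed.

Lemma setU1_idin (T : finType) (a : T) (A : {set T}) : a \in A -> a |: A = A.
Proof. by move=> h; apply/setP => x; rewrite !inE; case: eqP => // ->. Qed.
Lemma setD1_idnin (T : finType) (a : T) (A : {set T}) : a \notin A -> A :\ a = A.
Proof. by move=> h; apply/setP => x; rewrite !inE; case: eqP => // ->; rewrite (negbTE h). Qed.

Section Sets.
Variable N : nat.
Lemma sqmonE (s : {set 'I_N}) i : sqmon s i = (i \in s).
Proof. by rewrite /sqmon mnmE. Qed.
Lemma mono_supp_sqmon (s : {set 'I_N}) : mono_supp (sqmon s) = s.
Proof. by apply/setP => i; rewrite !inE sqmonE; case: (i \in s). Qed.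
Lemma mono_suppD (m1 m2 : 'X_{1..N}) :
  mono_supp (m1 + m2)%MM = mono_supp m1 :|: mono_supp m2.
Proof. by apply/setP => i; rewrite !inE mnmDE addn_eq0 negb_and. Qed.
Lemma mono_suppU (j : 'I_N) : mono_supp U_(j)%MM = [set j].
Proof. by apply/setP => i; rewrite !inE mnm1E [j == i]eq_sym; case: (i == j). Qed.
Lemma mono_supp0 : mono_supp (0%MM : 'X_{1..N}) = set0.
Proof. by apply/setP => i; rewrite !inE mnm0E. Qed.
Lemma sqmonU1 (s : {set 'I_N}) j : j \notin s -> sqmon (j |: s) = (sqmon s + U_(j))%MM.
Proof.
move=> hj; apply/mnmP => i; rewrite mnmDE mnm1E !sqmonE !inE eq_sym.
by case: (eqVneq i j) => [->|_]; rewrite ?(negbTE hj) ?addn0.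
Qed.
End Sets.

Section Main.
Variables (R : realType) (n e : nat) (Lam : {set {set 'I_n.+1}})
  (p' : 'I_n.+1 -> 'I_e -> R) (a : 'I_n.+1 -> R) (F : R -> Prop).
Definition Wm := [set v : 'I_n.+1 | v != ord0].
Definition Fp := gen_field (fun x : R => exists s t, s != ord0 /\ x = p' s t).
Definition pp := fun (v : 'I_n.+1) (t : 'I_e.+1) =>
    if v == ord0 then (if t == ord_max then -1 else 0)
    else match unlift ord_max t with
         | Some t' => (1 + a v) * p' v t'
         | None => a v
         end.
Hypothesis hLam : is_complex Wm Lam.
Hypothesis hdim : card_dim Lam e.
Hypothesis hp' : alg_indep (@rat_field R) (fun st : 'I_n * 'I_e => p' (lift ord0 st.1) st.2).
Hypothesis ha : alg_indep Fp (fun s : 'I_n => a (lift ord0 s)).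
Hypothesis hF : subfield F.
Hypothesis hgen : forall x, gen_field (fun y => Fp y \/ exists s, s != ord0 /\ y = a s) x -> F x.

Definition al (s : 'I_n.+1) : R := if s == ord0 then 0 else (1 + a s)^-1.
Definition be (s : 'I_n.+1) : R := if s == ord0 then 0 else a s / (1 + a s).
Definition psi (w : {mpoly R[n.+1]}) := w \mPo zt al be.

Lemma Fpsub : subfield Fp. Proof. exact: gen_field_sub. Qed.
Lemma FpF x : Fp x -> F x.
Proof. by move=> h; apply: hgen; apply: gen_field_in; left. Qed.
Lemma aF s : s != ord0 -> F (a s).
Proof. by move=> h; apply: hgen; apply: gen_field_in; right; exists s. Qed.

Lemma nz_lift (s : 'I_n.+1) : s != ord0 -> exists s', s = lift ord0 s'.
Proof. by case: (unliftP ord0 s) => [s' ->|->]; [exists s' | rewrite eqxx]. Qed.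

Lemma a1 s : s != ord0 -> 1 + a s != 0.
Proof. by move=> /nz_lift [s' ->]; exact: (AI_one Fpsub ha s'). Qed.

Lemma al0 : al ord0 = 0. Proof. by rewrite /al eqxx. Qed.
Lemma be0 : be ord0 = 0. Proof. by rewrite /be eqxx. Qed.
Lemma al_nz s : s != ord0 -> al s != 0.
Proof. by move=> h; rewrite /al (negbTE h) invr_neq0 // a1. Qed.
Lemma alF s : F (al s).
Proof.
rewrite /al; case: eqP => h; first exact: sK0.
by apply: sKV => //; apply: sKD => //; [exact: sK1 | apply: aF; apply/eqP].
Qed.
Lemma beF s : F (be s).
Proof.
rewrite /be; case: eqP => h; first exact: sK0.
apply: sKM => //; first by apply: aF; apply/eqP.
by apply: sKV => //; apply: sKD => //; [exact: sK1 | apply: aF; apply/eqP].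
Qed.

Lemma ztF i : PF F (tnth (zt al be) i).
Proof.
by rewrite tnth_mktuple; apply: PFD => //; apply: PFZ => //; [exact: alF | exact: PFX | exact: beF | exact: PFX].
Qed.

Lemma alprod_nz (M : 'X_{1..n.+1}) : M ord0 = 0%N -> \prod_i al i ^+ M i != 0.
Proof.
move=> h; apply/prodf_neq0 => i _; case: (eqVneq i ord0) => [->|ne].
  by rewrite h expr0 oner_neq0.
by apply: expf_neq0; apply: al_nz.
Qed.

Lemma zt_homog i : tnth (zt al be) i \is 1.-homog.
Proof.
rewrite tnth_mktuple; apply: rpredD; apply: rpredZ; rewrite dhomogX; apply/eqP; exact: mdeg1.
Qed.

Lemma prod_homog (m : 'X_{1..n.+1}) :
  \prod_(i < n.+1) (tnth (zt al be) i) ^+ (m i) \is (mdeg m).-homog.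
Proof.
rewrite mdegE; elim: (index_enum _) => [|j r IH]; rewrite ?big_nil ?big_cons /=.
  exact: dhomog1.
by apply: dhomogM => //; have := dhomogMn (m j) (zt_homog j); rewrite mul1n.
Qed.

Definition SP (A : {set 'I_n.+1}) (q : {mpoly R[n.+1]}) :=
  forall M, q@_M != 0 -> mono_supp M \subset ord0 |: A.

Lemma SP1 A : SP A 1.
Proof.
move=> M; rewrite mcoeff1; case: (eqVneq M 0%MM) => [->|_]; last by rewrite eqxx.
by rewrite mono_supp0 sub0set.
Qed.

Lemma SPM A p q : SP A p -> SP A q -> SP A (p * q).
Proof.
move=> hp hq M; rewrite mcoeffM => hnz.
have [k /andP [/eqP hM hk]] : exists k : 'X_{1..n.+1 < (mdeg M).+1, (mdeg M).+1},
    (M == (k.1 + k.2)%MM) && (p@_k.1 * q@_k.2 != 0).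
  apply/existsP; apply: contraR hnz => /existsPn h; apply/eqP; rewrite big1 // => k hk.
  by move: (h k); rewrite hk /= negbK => /eqP.
move: hk; rewrite mulf_eq0 negb_or => /andP [h1 h2].
by rewrite hM mono_suppD subUset (hp _ h1) (hq _ h2).
Qed.

Lemma SPXn A p k : SP A p -> SP A (p ^+ k).
Proof. by move=> hp; elim: k => [|k IH]; [rewrite expr0; exact: SP1 | rewrite exprS; apply: SPM]. Qed.

Lemma SPz (A : {set 'I_n.+1}) (j : 'I_n.+1) : j \in A -> SP A (tnth (zt al be) j).
Proof.
move=> hj M; rewrite tnth_mktuple mcoeffD !mcoeffZ !mcoeffX.
case: (eqVneq U_(j)%MM M) => [<-|_]; first by rewrite mono_suppU sub1set !inE hj orbT.
case: (eqVneq U_(ord0)%MM M) => [<-|_]; first by rewrite mono_suppU sub1set !inE eqxx.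
by rewrite !mulr0 addr0 eqxx.
Qed.

Definition Qc (q : {mpoly R[n.+1]}) := forall M, q@_M != 0 -> mono_supp M \in cone ord0 Lam.

Lemma SP_cone A q : A \in Lam -> SP A q -> Qc q.
Proof.
move=> hA hq M hM0; have hM := hq M hM0; set s := mono_supp M :\ ord0.
have sA : s \subset A.
  apply/subsetP => x; rewrite !inE => /andP [hx0 hx].
  by have := subsetP hM x; rewrite !inE (negbTE hx0) /=; apply.
have sL : s \in Lam by case: hLam => _ hcl _ _; apply: hcl hA sA.
rewrite /cone inE; apply/existsP; exists s; rewrite sL /=.
case: (boolP (ord0 \in mono_supp M)) => h0.
  by rewrite /s setD1K // eqxx orbT.
by rewrite /s setD1_idnin // eqxx.
Qed.

Lemma Q_sum (I : Type) (r : seq I) (P : pred I) (G : I -> {mpoly R[n.+1]}) :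
  (forall i, P i -> Qc (G i)) -> Qc (\sum_(i <- r | P i) G i).
Proof.
move=> h; apply: (big_ind Qc) => //.
- by move=> M; rewrite mcoeff0 eqxx.
- move=> p q hp hq M; rewrite mcoeffD => hnz.
  case: (eqVneq p@_M 0) => [hp0|]; last exact: hp.
  by apply: hq; move: hnz; rewrite hp0 add0r.
Qed.

Lemma QZ c q : Qc q -> Qc (c *: q).
Proof. by move=> h M; rewrite mcoeffZ mulf_eq0 negb_or => /andP [_ /h]. Qed.

Definition thp (t : 'I_e) := fun v : 'I_n.+1 => if v \in Wm then p' v t else 0.

Lemma stress_psi i w : is_stress Fp Wm Lam p' i w ->
  is_stress F [set: 'I_n.+1] (cone ord0 Lam) pp i (psi w).
Proof.
case=> hc hd hs hl; split.
- apply: PF_comp => //; last exact: ztF.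
  by move=> m; apply: FpF.
- have hh : psi w \is i.-homog.
    rewrite /psi comp_mpolyE big_seq; apply: (big_ind (fun q => q \is i.-homog)).
    + exact: dhomog0.
    + by move=> x y hx hy; apply: dhomogD.
    move=> m hm; apply: dhomogZ.
    rewrite -(hd m); [exact: (prod_homog m) | by rewrite -mcoeff_msupp].
  by move=> m hm; apply: (dhomog_mf hh); rewrite mcoeff_msupp.
- rewrite /psi comp_mpolyE big_seq; apply: Q_sum => m hm; apply: QZ.
  have hmL : mono_supp m \in Lam by apply: hs; rewrite -mcoeff_msupp.
  apply: (SP_cone hmL); apply: (big_ind (SP (mono_supp m))) => //.
  + exact: SP1.
  + exact: SPM.
  + move=> j _; case: (eqVneq (m j) 0%N) => [->|hj]; first by rewrite expr0; exact: SP1.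
    by apply: SPXn; apply: SPz; rewrite inE.
- move=> t; rewrite (dlin_ext _ (l2 := fun v => pp v t)); last by move=> v; rewrite in_setT.
  rewrite /psi dlin_z.
  case: (unliftP ord_max t) => [t' ->|->].
    rewrite (dlin_ext _ (l2 := thp t')); first by rewrite hl comp_mpoly0.
    move=> j; rewrite /thp /pp !inE eqxx lift_eqF liftK.
    case: (eqVneq j ord0) => [->|hj]; first by rewrite al0 be0 !mulr0 addr0.
    have h1 := a1 hj.
    rewrite /al (negbTE hj) /= mul0r addr0; field; exact: h1.
  rewrite (dlin_ext _ (l2 := fun _ => 0)); first by rewrite dlin0 comp_mpoly0.
  move=> j; rewrite /pp eqxx unlift_none.
  case: (eqVneq j ord0) => [->|hj]; first by rewrite al0 be0 !mulr0 addr0.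
  have h1 := a1 hj.
  by rewrite /al /be (negbTE hj) eqxx mulN1r subrr.
Qed.

Lemma psi_lin c w1 w2 : psi (c *: w1 + w2) = c *: psi w1 + psi w2.
Proof. by rewrite /psi comp_mpolyD comp_mpolyZ. Qed.

Lemma psi_deriv w : psi (dlin (fun v => if v == ord0 then 0 else 1) w) =
  dlin (fun _ => 1) (psi w).
Proof.
rewrite /psi dlin_z; congr (_ \mPo _); apply: dlin_ext => j.
case: (eqVneq j ord0) => [->|hj]; first by rewrite al0 be0 !mulr0 addr0.
have h1 := a1 hj.
rewrite /al /be (negbTE hj); field; exact: h1.
Qed.

Lemma nz_no0 i w m : is_stress Fp Wm Lam p' i w -> w@_m != 0 -> ord0 \notin mono_supp m.
Proof.
case=> _ _ hs _ h; have hL := hs m h.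
case: hLam => _ _ _ hW; apply/negP => h0.
by have := subsetP (hW _ hL) _ h0; rewrite inE eqxx.
Qed.

Lemma sqmon0 (s : {set 'I_n.+1}) : ord0 \notin s -> sqmon s ord0 = 0%N.
Proof. by move=> h; rewrite sqmonE (negbTE h). Qed.

Lemma coef0 w (s : {set 'I_n.+1}) : ord0 \notin s ->
  ((psi w)@_(sqmon s) != 0) = (w@_(sqmon s) != 0).
Proof.
move=> h0; have hM := sqmon0 h0.
by rewrite /psi (C1 be al0 _ hM) mulf_eq0 negb_or (alprod_nz hM) andbT.
Qed.

Lemma coef1 i w (tau : {set 'I_n.+1}) : is_stress Fp Wm Lam p' i w -> ord0 \notin tau ->
  ((psi w)@_(sqmon (ord0 |: tau)) != 0) = [exists j, w@_(sqmon tau + U_(j)) != 0].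
Proof.
move=> hw h0; have hM := sqmon0 h0.
rewrite sqmonU1 // /psi (C2 al0 be0 _ hM) mulf_eq0 negb_or (alprod_nz hM) andbT.
rewrite big_ord_recl be0 mul0r add0r.
apply/idP/idP.
  move=> hnz; apply: contraR hnz => /existsPn h; apply/eqP; rewrite big1 // => s _.
  by have := h (lift ord0 s); rewrite negbK => /eqP ->; rewrite mul0rn mulr0.
case/existsP => j hj.
case: (eqVneq j ord0) => [hj0'|hj0].
  by exfalso; move: (nz_no0 hw hj); rewrite hj0' mono_suppD mono_suppU !inE eqxx orbT.
have [s hs] := nz_lift hj0.
have hc : forall m, Fp w@_m by case: hw.
pose c' := fun s => w@_(sqmon tau + U_(lift ord0 s)) *+ (sqmon tau (lift ord0 s)).+1.
have -> : \sum_(i0 < n) be (lift ord0 i0) * (w@_(sqmon tau + U_(lift ord0 i0)) *+ (sqmon tau (lift ord0 i0)).+1)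
  = \sum_(s0 < n) c' s0 * (a (lift ord0 s0) / (1 + a (lift ord0 s0))).
  by apply: eq_bigr => s' _; rewrite /be lift_eqF mulrC.
apply: (AI_lin (c := c') Fpsub ha).
  by move=> s'; apply: (sKMn Fpsub); exact: hc.
by exists s; rewrite /c' -hs mulrn_eq0 /= hj.
Qed.

Lemma G2 i w (tau : {set 'I_n.+1}) : is_stress Fp Wm Lam p' i w ->
  [exists j, w@_(sqmon tau + U_(j)) != 0] ->
  [exists j, (j \notin tau) && (w@_(sqmon tau + U_(j)) != 0)].
Proof.
move=> hw /existsP [j hj].
case: (boolP (j \in tau)) => hjt; last by apply/existsP; exists j; rewrite hjt.
apply: contraT => /existsPn hno.
have H : forall k, k \notin tau -> w@_(sqmon tau + U_(k)) = 0.
  by move=> k hk; move: (hno k); rewrite hk /= negbK => /eqP.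
case: (hw) => hc hd hs hl.
have htL : tau \in Lam.
  have := hs _ hj; rewrite mono_suppD mono_suppU mono_supp_sqmon.
  have -> : tau :|: [set j] = tau.
    by apply/setP => x; rewrite !inE; case: (eqVneq x j) => [->|]; rewrite ?hjt ?orbT ?orbF.
  by [].
have h0 : ord0 \notin tau.
  case: hLam => _ _ _ hW; apply/negP => h0.
  by have := subsetP (hW _ htL) _ h0; rewrite inE eqxx.
have hte : (#|tau| <= e)%N by case: hdim => hd1 _; apply: hd1.
pose T' := [set s : 'I_n | lift ord0 s \in tau].
have hk : (#|T'| <= e)%N.
  apply: leq_trans hte; rewrite -(card_imset _ (@lift_inj _ ord0)).
  by apply: subset_leq_card; apply/subsetP => x /imsetP [s hs' ->]; rewrite inE in hs'.
pose c := fun s : 'I_n => w@_(sqmon tau + U_(lift ord0 s)) *+ (sqmon tau (lift ord0 s)).+1.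
have hT : forall s, s \notin T' -> c s = 0.
  by move=> s; rewrite inE => hs'; rewrite /c H // mul0rn.
have hsum : forall t : 'I_e, \sum_s c s * (fun st : 'I_n * 'I_e => p' (lift ord0 st.1) st.2) (s, t) = 0.
  move=> t; have := congr1 (mcoeff (sqmon tau)) (hl t).
  rewrite mcoeff_dlin mcoeff0 big_ord_recl /= !inE eqxx mul0r add0r => E.
  rewrite -[RHS]E; apply: eq_bigr => s _; rewrite !inE lift_eqF /= mulrC.
  by [].
have := AI_mat (rat_field_sub R) hp' hk hT hsum.
have hj0 : j != ord0 by apply: contraNneq h0 => <-.
have [s hs'] := nz_lift hj0.
move=> /(_ s); rewrite /c -hs' => /eqP; rewrite mulrn_eq0 /=.
by move=> /eqP h; move: hj; rewrite h eqxx.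
Qed.

Lemma supp_psi i w : is_stress Fp Wm Lam p' i w ->
  supp i (psi w) = skel_card i (cone ord0 (supp i w)).
Proof.
move=> hw; apply/setP => t; rewrite /skel_card /supp /cone !inE.
apply/idP/idP.
- case/existsP => s /and3P [/eqP hs hnz ts].
  apply/andP; split; last by rewrite -hs; exact: subset_leq_card ts.
  case: (boolP (ord0 \in s)) => h0.
  + set tau := s :\ ord0.
    have ht0 : ord0 \notin tau by rewrite setD11.
    have hsE : s = ord0 |: tau by rewrite setD1K.
    move: hnz; rewrite hsE (coef1 hw ht0) => /(G2 hw) /existsP [j /andP [hjt hj]].
    set sig := j |: tau.
    have hsig : sqmon sig = (sqmon tau + U_(j))%MM by rewrite sqmonU1.
    have csig : #|sig| = i by rewrite -hs hsE !cardsU1 hjt ht0.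
    have tsub : t :\ ord0 \subset sig.
      apply/subsetP => x; rewrite !inE => /andP [hx0 hxt].
      by rewrite hx0 (subsetP ts x hxt) orbT.
    apply/existsP; exists (t :\ ord0); apply/andP; split.
      by rewrite inE; apply/existsP; exists sig; rewrite csig eqxx hsig hj tsub.
    case: (boolP (ord0 \in t)) => ht0'.
      by rewrite setD1K // eqxx orbT.
    by rewrite setD1_idnin // eqxx.
  + rewrite (coef0 _ h0) in hnz.
    apply/existsP; exists t; rewrite eqxx andbT.
    by rewrite inE; apply/existsP; exists s; rewrite hs eqxx hnz ts.
- case/andP => /existsP [u /andP [hu htu]] hti.
  move: hu; rewrite inE => /existsP [sig /and3P [/eqP hsig hnz us]].
  have h0sig : ord0 \notin sig by have := nz_no0 hw hnz; rewrite mono_supp_sqmon.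
  have h0u : ord0 \notin u by apply: contra h0sig; apply: (subsetP us).
  move: hti; case/orP: htu => /eqP -> hti.
    by apply/existsP; exists sig; rewrite hsig eqxx (coef0 _ h0sig) hnz us.
  move: hti; rewrite cardsU1 h0u => hti.
  have [j hj] : exists j, j \in sig :\: u.
    case: (set_0Vmem (sig :\: u)) => [E|[j hj]]; last by exists j.
    exfalso; move/eqP: E; rewrite setD_eq0 => /subset_leq_card; rewrite hsig.
    by move: hti => /= hti hle; have := leq_trans hti hle; rewrite ltnn.
  move: hj; rewrite inE => /andP [hju hjs].
  set tau := sig :\ j.
  have htau0 : ord0 \notin tau by rewrite inE negb_and h0sig orbT.
  have hjt : j \notin tau by rewrite setD11.
  apply/existsP; exists (ord0 |: tau); apply/and3P; split.
  + by rewrite cardsU1 htau0 -hsig (cardsD1 j sig) hjs.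
  + rewrite (coef1 hw htau0); apply/existsP; exists j.
    by rewrite -sqmonU1 // setD1K.
  + apply: setUS; apply/subsetP => x hx; rewrite inE (subsetP us x hx) andbT.
    by rewrite !inE; apply/eqP => hxj; move: hju; rewrite -hxj hx.
Qed.
End Main.

Unset Implicit Arguments. Set Strict Implicit. Set Printing Implicit Defensive.

Theorem lemma3p1 (R : realType) (n e : nat) (Lam : {set {set 'I_n.+1}})
    (p' : 'I_n.+1 -> 'I_e -> R) (a : 'I_n.+1 -> R) (F : R -> Prop) :
  let W' := [set v : 'I_n.+1 | v != ord0] in
  is_complex W' Lam -> card_dim Lam e ->
  alg_indep (@rat_field R) (fun st : 'I_n * 'I_e => p' (lift ord0 st.1) st.2) ->
  let F' := gen_field (fun x : R => exists s t, s != ord0 /\ x = p' s t) in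
  alg_indep F' (fun s : 'I_n => a (lift ord0 s)) ->
  subfield F ->
  (forall x, gen_field (fun y => F' y \/ exists s, s != ord0 /\ y = a s) x -> F x) ->
  let p := fun (v : 'I_n.+1) (t : 'I_e.+1) =>
    if v == ord0 then (if t == ord_max then -1 else 0)
    else match unlift ord_max t with
         | Some t' => (1 + a v) * p' v t'
         | None => a v
         end in
  let Gam := cone ord0 Lam in
  exists psi : nat -> {mpoly R[n.+1]} -> {mpoly R[n.+1]},
    (forall i : nat, (i <= e)%N ->
       [/\ (forall w, is_stress F' W' Lam p' i w ->
              is_stress F [set: 'I_n.+1] Gam p i (psi i w)),
           (forall (c : R) w1 w2, F' c ->
              is_stress F' W' Lam p' i w1 -> is_stress F' W' Lam p' i w2 ->
              psi i (c *: w1 + w2) = c *: psi i w1 + psi i w2) &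
           (forall w, is_stress F' W' Lam p' i w ->
              supp i (psi i w) = skel_card i (cone ord0 (supp i w)))]) /\
    (forall i : nat, (1 <= i <= e)%N -> forall w, is_stress F' W' Lam p' i w ->
       psi i.-1 (dlin (fun v => if v == ord0 then 0 else 1) w)
       = dlin (fun _ => 1) (psi i w)).
Proof.
move=> W' hLam hdim hp' F' ha hF hgen p Gam.
exists (fun _ w => psi a w); split.
  move=> i hi; split.
  - by move=> w hw; exact: (stress_psi hLam ha hF hgen hw).
  - by move=> c w1 w2 _ _ _; exact: psi_lin.
  - by move=> w hw; exact: (supp_psi hLam hdim hp' ha hw).
by move=> i hi w hw; exact: (psi_deriv ha).
Qed.
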